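(* $\mathrm{PBTD}(\Pi^\infty)=2$, and for every $m\ge1$, $\mathrm{PBTD}(\Pi^1_{\infty,m})=\Theta(m)$ (as a function of $m$).
   Context: Fix a countably infinite set $X$ of variables and an alphabet $\Sigma$ (finite or countably infinite, disjoint from $X$), $z=|\Sigma|$. A pattern is a nonempty finite string over $X\cup\Sigma$; $\Pi^z$ is the class of all patterns over an alphabet of size $z$ ($\Pi^\infty$: over a countably infinite alphabet). $\Pi^z_{\infty,m}$ is the class of patterns in $\Pi^z$ in which every variable occurs at most $m$ times (no bound on the number of distinct variables). A substitution is a morphism $h:(X\cup\Sigma)^*\to\Sigma^*$ fixing letters; $L(\pi)$ (erasing pattern language) is the set of all $h(\pi)$; patterns with equal languages are identified. A labelled example is $(w,\pm)$ with $w\in\Sigma^*$; a teaching set for $\pi$ w.r.t. a class $\Pi$ is a set $T$ of labelled examples consistent with $\pi$ such that every $\tau\in\Pi$ consistent with $T$ has $L(\tau)=L(\pi)$. For a strict partial order $\prec$ on $\Pi$, a teaching set for $\pi$ w.r.t. $(\Pi,\prec)$ is a teaching set for $\pi$ w.r.t. $\Pi\setminus\{\pi':\pi'\prec\pi\}$; $\mathrm{PBTD}(\Pi,\prec)$ is the supremum over $\pi$ of the minimum size of such sets and $\mathrm{PBTD}(\Pi)=\inf_\prec\mathrm{PBTD}(\Pi,\prec)$. *)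

(* Defs.v *)
From Stdlib Require Import List Arith.
Import ListNotations.
Set Implicit Arguments.

Inductive sym (A : Type) : Type :=
| Var : nat -> sym A
| Let : A -> sym A.
Arguments Var {A} _.
Arguments Let {A} _.

Definition pattern (A : Type) := list (sym A).

Definition is_pattern {A : Type} (p : pattern A) : Prop := p <> [].

Fixpoint subst {A : Type} (h : nat -> list A) (p : pattern A) : list A :=
  match p with
  | [] => []
  | Var x :: p' => h x ++ subst h p'
  | Let a :: p' => a :: subst h p'
  end.

Definition lang {A : Type} (p : pattern A) (w : list A) : Prop :=
  exists h : nat -> list A, subst h p = w.

Definition lang_eq {A : Type} (p q : pattern A) : Prop :=
  forall w, lang p w <-> lang q w.

Fixpoint occ {A : Type} (x : nat) (p : pattern A) : nat :=
  match p with
  | [] => 0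
  | Var y :: p' => (if Nat.eqb x y then 1 else 0) + occ x p'
  | Let _ :: p' => occ x p'
  end.

(* Pi^infty : all patterns over a countably infinite alphabet (Sigma = nat). *)
Definition Pi_inf (p : pattern nat) : Prop := is_pattern p.

(* Pi^1_{infty,m} : patterns over a unary alphabet (Sigma = unit), each variable
   occurring at most m times. *)
Definition Pi1_m (m : nat) (p : pattern unit) : Prop :=
  is_pattern p /\ forall x, occ x p <= m.

Definition example (A : Type) := (list A * bool)%type.

Definition consistent {A : Type} (p : pattern A) (T : list (example A)) : Prop :=
  forall w b, In (w, b) T -> (lang p w <-> b = true).

(* A strict partial order on the class C, where patterns with equal languages are
   identified: irreflexive, transitive, and compatible with language equality
   (i.e. a strict partial order on the quotient of C by language equality). *)
Definition strict_po {A : Type} (C : pattern A -> Prop)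
  (prec : pattern A -> pattern A -> Prop) : Prop :=
  (forall p, C p -> ~ prec p p) /\
  (forall p q r, C p -> C q -> C r -> prec p q -> prec q r -> prec p r) /\
  (forall p p' q q', C p -> C p' -> C q -> C q' ->
      lang_eq p p' -> lang_eq q q' -> prec p q -> prec p' q').

Definition teaching_set {A : Type} (C : pattern A -> Prop)
  (prec : pattern A -> pattern A -> Prop) (p : pattern A) (T : list (example A)) : Prop :=
  consistent p T /\
  forall t, C t -> ~ prec t p -> consistent t T -> lang_eq t p.

Definition PBTD_le {A : Type} (C : pattern A -> Prop)
  (prec : pattern A -> pattern A -> Prop) (d : nat) : Prop :=
  forall p, C p -> exists T, length T <= d /\ teaching_set C prec p T.

(* Main.v *)
Require Import Defs.
From Stdlib Require Import List Arith Lia Classical.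
Import ListNotations.

Lemma subst_app {A} (h : nat -> list A) p q : subst h (p ++ q) = subst h p ++ subst h q.
Proof. induction p as [|[x|a] p IH]; simpl; auto; rewrite IH; auto. now rewrite app_assoc. Qed.

Definition nl {A} (p : pattern A) : nat := length (subst (fun _ => []) p).

Lemma nl_le {A} (h : nat -> list A) p : nl p <= length (subst h p).
Proof. unfold nl; induction p as [|[x|a] p IH]; simpl; try rewrite !length_app; simpl; lia. Qed.

Lemma nl_lang_eq {A} (p q : pattern A) : lang_eq p q -> nl p = nl q.
Proof.
  intros H.
  assert (H1 : lang q (subst (fun _ => []) p)) by (apply H; eexists; reflexivity).
  assert (H2 : lang p (subst (fun _ => []) q)) by (apply H; eexists; reflexivity).
  destruct H1 as [h1 E1]; destruct H2 as [h2 E2].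
  pose proof (nl_le h1 q); pose proof (nl_le h2 p).
  unfold nl in *; rewrite E1 in *; rewrite E2 in *; lia.
Qed.

Definition gprec {A} (t p : pattern A) : Prop :=
  nl t < nl p \/ (nl t = nl p /\ (forall w, lang p w -> lang t w) /\ ~ (forall w, lang t w -> lang p w)).

Lemma gprec_po {A} (C : pattern A -> Prop) : strict_po C gprec.
Proof.
  unfold gprec; split; [|split].
  - intros p _ [H|[_ [H1 H2]]]; [lia| apply H2; auto].
  - intros p q r _ _ _ [H|[E [H1 H2]]] [H'|[E' [H1' H2']]]; try (left; lia).
    right; split; [lia|split; [intros w Hw; apply H1, H1', Hw|]].
    intro K; apply H2'; intros w Hw; apply K; apply H1; auto.
  - intros p p' q q' _ _ _ _ Ep Eq.
    pose proof (nl_lang_eq _ _ Ep) as N1; pose proof (nl_lang_eq _ _ Eq) as N2.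
    intros [H|[E [H1 H2]]]; [left; lia|].
    right; split; [lia|split].
    + intros w Hw; apply Ep, H1, Eq, Hw.
    + intro K; apply H2; intros w Hw; apply Eq, K, Ep, Hw.
Qed.

Lemma gprec_teach {A} (t p : pattern A) :
  (forall w, lang p w -> lang t w) -> ~ gprec t p -> lang_eq t p.
Proof.
  intros Inc N.
  assert (nl t <= nl p).
  { destruct (Inc (subst (fun _ => []) p)) as [h E]; [eexists; reflexivity|].
    pose proof (nl_le h t); rewrite E in H; exact H. }
  assert (nl t = nl p) by (unfold gprec in N; lia).
  assert (K : forall w, lang t w -> lang p w).
  { apply NNPP; intro K; apply N; right; auto. }
  intro w; split; auto.
Qed.

Fixpoint maxl (p : pattern nat) : nat :=
  match p with [] => 0 | Var _ :: p' => maxl p' | Let a :: p' => max a (maxl p') end.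

Lemma maxl_in p c : In (Let c) p -> c <= maxl p.
Proof. induction p as [|[x|a] p IH]; simpl; intros H; [tauto| |].
  destruct H as [H|H]; [discriminate|auto].
  destruct H as [H|H]; [injection H; intros; subst; lia| specialize (IH H); lia]. Qed.

Lemma in_subst_let {A} (h : nat -> list A) t c : In (Let c) t -> In c (subst h t).
Proof. induction t as [|[x|a] t IH]; simpl; intros H; [tauto| |].
  destruct H as [H|H]; [discriminate|apply in_or_app; auto].
  destruct H as [H|H]; [injection H; intros; subst; auto| auto]. Qed.

Lemma in_subst_inv {A} (f : nat -> list A) p c : In c (subst f p) -> In (Let c) p \/ exists x, In c (f x).
Proof. induction p as [|[x|a] p IH]; simpl; intros H; [tauto| |].
  apply in_app_or in H; destruct H as [H|H]; [right; eauto|].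
  destruct (IH H) as [K|K]; auto.
  destruct H as [H|H]; [subst; auto|]. destruct (IH H) as [K|K]; auto. Qed.

Lemma subst_ext {A} (f g : nat -> list A) p : (forall x, f x = g x) -> subst f p = subst g p.
Proof. intros E; induction p as [|[x|a] p IH]; simpl; congruence. Qed.

Lemma flat_map_subst (F : nat -> list nat) h t :
  (forall c, In (Let c) t -> F c = [c]) ->
  flat_map F (subst h t) = subst (fun y => flat_map F (h y)) t.
Proof.
  induction t as [|[x|a] t IH]; simpl; intros H; auto.
  - rewrite flat_map_app, IH; auto.
  - rewrite H by auto; simpl; rewrite IH; auto.
Qed.

Definition Fm (g : nat -> list nat) (N c : nat) : list nat :=
  if c <? N then [c] else if Nat.even (c - N) then g (Nat.div2 (c - N)) else [].

Lemma Fm_fresh g N x : Fm g N (N + 2 * x) = g x.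
Proof.
  unfold Fm. replace (N + 2 * x <? N) with false by (symmetry; apply Nat.ltb_ge; lia).
  replace (N + 2 * x - N) with (2 * x) by lia.
  rewrite Nat.even_mul; simpl. f_equal. replace (x + (x + 0)) with (2 * x) by lia. apply Nat.div2_double.
Qed.

Lemma part1_upper : exists prec, strict_po Pi_inf prec /\ PBTD_le Pi_inf prec 2.
Proof.
  exists gprec; split; [apply gprec_po|].
  intros p Hp.
  set (N := S (maxl p)).
  set (w1 := subst (fun x => [N + 2 * x]) p).
  set (w2 := subst (fun x => [N + 2 * x + 1]) p).
  exists [(w1, true); (w2, true)]; split; [simpl; lia|split].
  - intros w b Hin; simpl in Hin.
    destruct Hin as [E|[E|[]]]; injection E; intros; subst; split; auto;
      intros _; eexists; reflexivity.
  - intros t _ Ht Hc.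
    apply gprec_teach; auto.
    assert (L1 : lang t w1) by (apply (Hc w1 true); simpl; auto).
    assert (L2 : lang t w2) by (apply (Hc w2 true); simpl; auto).
    destruct L1 as [h1 E1]; destruct L2 as [h2 E2].
    assert (LT : forall c, In (Let c) t -> c < N).
    { intros c Hc'.
      pose proof (in_subst_let h1 t c Hc') as A1; rewrite E1 in A1.
      pose proof (in_subst_let h2 t c Hc') as A2; rewrite E2 in A2.
      apply in_subst_inv in A1; apply in_subst_inv in A2.
      destruct A1 as [A1|[x A1]]; [apply maxl_in in A1; unfold N; lia|].
      destruct A2 as [A2|[y A2]]; [apply maxl_in in A2; unfold N; lia|].
      simpl in A1, A2; destruct A1 as [A1|[]]; destruct A2 as [A2|[]]; lia. }
    intros v [g Ev]; subst v.
    exists (fun y => flat_map (Fm g N) (h1 y)).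
    rewrite <- flat_map_subst.
    2:{ intros c Hc'; unfold Fm; specialize (LT c Hc').
        apply Nat.ltb_lt in LT; rewrite LT; auto. }
    rewrite E1; unfold w1; rewrite flat_map_subst.
    2:{ intros c Hc'; unfold Fm; apply maxl_in in Hc'.
        assert (c <? N = true) as LT' by (apply Nat.ltb_lt; unfold N; lia); rewrite LT'; auto. }
    apply subst_ext; intros x; cbn [flat_map]; rewrite app_nil_r; exact (Fm_fresh g N x).
Qed.

Definition X0 : pattern nat := [Var 0].
Definition Sg (c : nat) : pattern nat := [Let c].

Lemma lang_X0 w : lang X0 w.
Proof. exists (fun _ => w); simpl; apply app_nil_r. Qed.

Lemma lang_Sg c w : lang (Sg c) w <-> w = [c].
Proof. split; [intros [h E]; simpl in E; auto| intros ->; exists (fun _ => []); reflexivity]. Qed.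

Lemma Sg_X0 c : ~ lang_eq (Sg c) X0.
Proof. intros E. destruct (proj2 (E []) (lang_X0 [])) as [h H]; discriminate. Qed.

Lemma Sg_Sg c d : lang_eq (Sg c) (Sg d) -> c = d.
Proof. intros E. assert (lang (Sg d) [c]) by (apply E, lang_Sg; auto).
  apply lang_Sg in H; congruence. Qed.

Lemma subst_mapLet {A} (h : nat -> list A) w : subst h (map Let w) = w.
Proof. induction w; simpl; congruence. Qed.

Lemma lower1 : forall prec, strict_po Pi_inf prec -> ~ PBTD_le Pi_inf prec 1.
Proof.
  intros prec [Irr [Tr Co]] Pb.
  assert (CX : Pi_inf X0) by discriminate.
  assert (CS : forall c, Pi_inf (Sg c)) by (intros c; discriminate).
  assert (Cyc : forall p q, Pi_inf p -> Pi_inf q -> prec p q -> prec q p -> False).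
  { intros p q Hp Hq H1 H2; apply (Irr p Hp); eapply Tr; eauto. }
  assert (Cyc3 : forall p q r, Pi_inf p -> Pi_inf q -> Pi_inf r -> prec p q -> prec q r -> prec r p -> False).
  { intros p q r Hp Hq Hr H1 H2 H3; apply (Cyc p r); eauto. }
  assert (EqP : forall p q r, Pi_inf p -> Pi_inf q -> Pi_inf r -> lang_eq p q -> prec p r -> prec q r).
  { intros p q r Hp Hq Hr E H; eapply (Co p q r r); eauto; intro; tauto. }
  assert (Sym : forall (p q : pattern nat), lang_eq p q -> lang_eq q p).
  { intros p q E w; split; apply E. }
  assert (WX : exists w, forall t, Pi_inf t -> lang t w -> ~ lang_eq t X0 -> prec t X0).
  { destruct (Pb X0 CX) as [T [LT [Cons Teach]]].
    destruct T as [|[w b] [|]]; simpl in LT; try lia.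
    - exists []; intros t Ht _ N. destruct (classic (prec t X0)); auto.
      exfalso; apply N, Teach; auto. intros w b [].
    - exists w; intros t Ht Lw N. destruct (classic (prec t X0)) as [P|P]; auto.
      exfalso; apply N, Teach; auto.
      assert (b = true) by (apply (Cons w b); simpl; auto; apply lang_X0).
      subst b; intros w' b' [E|[]]; injection E; intros; subst; split; auto. }
  assert (SC : forall c, prec X0 (Sg c) \/ exists w, w <> [c] /\
            forall t, Pi_inf t -> ~ lang t w -> ~ lang_eq t (Sg c) -> prec t (Sg c)).
  { intros c. destruct (Pb (Sg c) (CS c)) as [T [LT [Cons Teach]]].
    destruct T as [|[w b] [|]]; simpl in LT; try lia.
    - left. destruct (classic (prec X0 (Sg c))) as [P|P]; auto.
      exfalso; apply (Sg_X0 c), Sym, Teach; auto. intros w b [].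
    - destruct b.
      + left. assert (w = [c]) by (apply lang_Sg, (Cons w true); simpl; auto).
        destruct (classic (prec X0 (Sg c))) as [P|P]; auto.
        exfalso; apply (Sg_X0 c), Sym, Teach; auto.
        intros w' b' [E|[]]; injection E; intros; subst; split; auto; intros; apply lang_X0.
      + right; exists w; split.
        * intros ->. assert (lang (Sg c) [c]) by (apply lang_Sg; auto).
          apply (Cons [c] false) in H; [discriminate|simpl; auto].
        * intros t Ht Nw N. destruct (classic (prec t (Sg c))) as [P|P]; auto.
          exfalso; apply N, Teach; auto.
          intros w' b' [E|[]]; injection E; intros; subst; split; try tauto; discriminate. }
  assert (ClA : forall c, prec X0 (Sg c) -> False).
  { intros c Hc. destruct WX as [w Hw].
    set (s := Var 0 :: Var 0 :: map Let w).
    assert (Cs : Pi_inf s) by discriminate.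
    assert (Ls : lang s w) by (exists (fun _ => []); unfold s; simpl; apply subst_mapLet).
    set (e := match w with [a] => S a | _ => 0 end).
    assert (NLs : ~ lang s [e]).
    { intros [h E]; unfold s in E; simpl in E; rewrite subst_mapLet in E.
      assert (L := f_equal (@length nat) E); rewrite !length_app in L; simpl in L.
      destruct (h 0) as [|z hz]; simpl in *; [|lia].
      simpl in E; unfold e in E; destruct w as [|a [|b w']]; simpl in E; try discriminate.
      injection E; lia. }
    assert (sX : prec s X0).
    { apply Hw; [exact Cs|exact Ls|]. intros E; apply NLs, E, lang_X0. }
    assert (sc : prec s (Sg c)) by (apply (Tr s X0 (Sg c)); auto).
    destruct (Pb s Cs) as [T [LT [Cons Teach]]].
    assert (NX : ~ consistent X0 T).
    { intros K. destruct (classic (prec X0 s)) as [P|P]; [eapply Cyc; eauto|].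
      pose proof (Teach X0 CX P K) as E. apply NLs, E, lang_X0. }
    destruct T as [|[v b] [|]]; simpl in LT; try lia.
    - apply NX; intros w' b' [].
    - destruct b.
      { apply NX; intros w' b' [E|[]]; injection E; intros; subst; split; auto; intros; apply lang_X0. }
      assert (vc : v = [c]).
      { destruct (classic (v = [c])) as [|Nv]; auto. exfalso.
        assert (K : consistent (Sg c) [(v, false)]).
        { intros w' b' [E|[]]; injection E; intros; subst; split; try discriminate.
          intros H; apply lang_Sg in H; contradiction. }
        destruct (classic (prec (Sg c) s)) as [P|P]; [eapply Cyc; eauto|].
        pose proof (Teach _ (CS c) P K) as E.
        apply (Irr (Sg c) (CS c)). apply (Co s (Sg c) (Sg c) (Sg c)); auto. apply Sym; auto. intro; tauto. }
      subst v.
      assert (dX : forall d, d <> c -> prec (Sg d) X0).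
      { intros d Hd.
        assert (K : consistent (Sg d) [([c], false)]).
        { intros w' b' [E|[]]; injection E; intros; subst; split; try discriminate.
          intros H; apply lang_Sg in H; congruence. }
        destruct (classic (prec (Sg d) s)) as [P|P]; [eapply Tr; eauto|].
        pose proof (Teach _ (CS d) P K) as E.
        eapply EqP; [exact Cs| exact (CS d) | exact CX | apply Sym, E | exact sX]. }
      assert (wd : forall d, d <> c -> exists wd, wd <> [d] /\
            forall t, Pi_inf t -> ~ lang t wd -> ~ lang_eq t (Sg d) -> prec t (Sg d)).
      { intros d Hd. destruct (SC d) as [P|P]; auto. exfalso; eapply Cyc; [exact CX|exact (CS d)|exact P|auto]. }
      assert (wdc : forall d, d <> c -> forall t, Pi_inf t -> ~ lang t [c] -> ~ lang_eq t (Sg d) -> prec t (Sg d)).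
      { intros d Hd. destruct (wd d Hd) as [wd' [Nd Hd']].
        destruct (classic (wd' = [c])) as [->|Nc]; auto. exfalso.
        assert (P1 : prec (Sg c) (Sg d)).
        { apply Hd'; auto. intros H; apply lang_Sg in H; congruence.
          intros E; apply Sg_Sg in E; congruence. }
        apply (Cyc3 (Sg c) (Sg d) X0); auto. }
      assert (P12 : prec (Sg (c+2)) (Sg (c+1))).
      { apply wdc; auto; try lia. intros H; apply lang_Sg in H; injection H; lia.
        intros E; apply Sg_Sg in E; lia. }
      assert (P21 : prec (Sg (c+1)) (Sg (c+2))).
      { apply wdc; auto; try lia. intros H; apply lang_Sg in H; injection H; lia.
        intros E; apply Sg_Sg in E; lia. }
      eapply Cyc; [exact (CS (c+1))|exact (CS (c+2))|exact P21|exact P12]. }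
  assert (NC : forall c, exists w, w <> [c] /\
            forall t, Pi_inf t -> ~ lang t w -> ~ lang_eq t (Sg c) -> prec t (Sg c)).
  { intros c; destruct (SC c) as [P|P]; auto; exfalso; eapply ClA; eauto. }
  assert (Edge : forall i j, i <> j -> forall w, (forall t, Pi_inf t -> ~ lang t w -> ~ lang_eq t (Sg i) -> prec t (Sg i)) ->
                 w <> [j] -> prec (Sg j) (Sg i)).
  { intros i j Hij w Hw Nj. apply Hw; auto. intros H; apply lang_Sg in H; congruence.
    intros E; apply Sg_Sg in E; congruence. }
  destruct (NC 0) as [w0 [N0 H0]]; destruct (NC 1) as [w1 [N1 H1]]; destruct (NC 2) as [w2 [N2 H2]].
  assert (C0 := CS 0); assert (C1 := CS 1); assert (C2 := CS 2).
  pose proof (Edge 0 1 ltac:(lia) w0 H0) as e10; pose proof (Edge 0 2 ltac:(lia) w0 H0) as e20.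
  pose proof (Edge 1 0 ltac:(lia) w1 H1) as e01; pose proof (Edge 1 2 ltac:(lia) w1 H1) as e21.
  pose proof (Edge 2 0 ltac:(lia) w2 H2) as e02; pose proof (Edge 2 1 ltac:(lia) w2 H2) as e12.
  destruct (classic (w0 = [1])) as [E0|E0];
  destruct (classic (w1 = [0])) as [E1|E1];
  destruct (classic (w2 = [0])) as [E2|E2].
  all: try (apply (Cyc _ _ C0 C1 (e01 ltac:(congruence)) (e10 ltac:(congruence)))).
  all: try (apply (Cyc _ _ C0 C2 (e02 ltac:(congruence)) (e20 ltac:(congruence)))).
  all: try (apply (Cyc _ _ C1 C2 (e12 ltac:(congruence)) (e21 ltac:(congruence)))).
  all: try (apply (Cyc3 _ _ _ C0 C1 C2 (e01 ltac:(congruence)) (e12 ltac:(congruence)) (e20 ltac:(congruence)))).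
  all: try (apply (Cyc3 _ _ _ C0 C2 C1 (e02 ltac:(congruence)) (e21 ltac:(congruence)) (e10 ltac:(congruence)))).
Qed.

Lemma unit_eq (w w' : list unit) : length w = length w' -> w = w'.
Proof. revert w'; induction w as [|[] w IH]; intros [|[] w'] H; simpl in *; try lia; auto.
  f_equal; apply IH; lia. Qed.

Lemma lang_len (p : pattern unit) w w' : length w = length w' -> lang p w -> lang p w'.
Proof. intros E [h H]; exists h; rewrite H; apply unit_eq; auto. Qed.

Fixpoint sumB (B : nat) (f : nat -> nat) : nat :=
  match B with 0 => 0 | S B' => sumB B' f + f B' end.

Lemma sumB_add B f g : sumB B (fun y => f y + g y) = sumB B f + sumB B g.
Proof. induction B; simpl; lia. Qed.

Lemma sumB_ext B f g : (forall y, y < B -> f y = g y) -> sumB B f = sumB B g.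
Proof. induction B; simpl; intros H; auto. rewrite IHB, H; auto. Qed.

Lemma sumB_ind B x a : x < B -> sumB B (fun y => (if Nat.eqb x y then 1 else 0) * a y) = a x.
Proof. induction B; simpl; intros H; [lia|].
  destruct (Nat.eqb_spec x B).
  - subst. rewrite (sumB_ext _ _ (fun _ => 0)). 2:{ intros y Hy. destruct (Nat.eqb_spec B y); lia. }
    clear. induction B; simpl; lia.
  - rewrite IHB by lia; lia. Qed.

Fixpoint maxv {A} (p : pattern A) : nat :=
  match p with [] => 0 | Var x :: p' => max x (maxv p') | Let _ :: p' => maxv p' end.

Lemma nl_cons_var {A} x (p : pattern A) : nl (Var x :: p) = nl p.
Proof. reflexivity. Qed.
Lemma nl_cons_let {A} a (p : pattern A) : nl (Let a :: p) = S (nl p).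
Proof. reflexivity. Qed.

Lemma len_formula {A} (h : nat -> list A) p B : maxv p < B ->
  length (subst h p) = nl p + sumB B (fun y => occ y p * length (h y)).
Proof.
  induction p as [|[x|a] p IH]; intros HB.
  - unfold nl; simpl. clear. induction B; simpl; lia.
  - simpl subst; simpl maxv in HB. rewrite length_app, IH by lia. rewrite nl_cons_var.
    assert (E : sumB B (fun y => occ y (Var x :: p) * length (h y)) = length (h x) + sumB B (fun y => occ y p * length (h y))).
    { rewrite (sumB_ext B _ (fun y => (if Nat.eqb x y then 1 else 0) * length (h y) + occ y p * length (h y))).
      2:{ intros y _; simpl; rewrite (Nat.eqb_sym y x); lia. }
      rewrite sumB_add, sumB_ind by lia; lia. }
    rewrite E; lia.
  - simpl subst; simpl maxv in HB. simpl length. rewrite IH by lia. rewrite nl_cons_let.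
    assert (E : sumB B (fun y => occ y (Let a :: p) * length (h y)) = sumB B (fun y => occ y p * length (h y))) by reflexivity.
    rewrite E; lia.
Qed.

Lemma len_concat {A} (h1 h2 : nat -> list A) t :
  length (subst (fun y => h1 y ++ h2 y) t) + nl t = length (subst h1 t) + length (subst h2 t).
Proof. induction t as [|[x|a] t IH]; simpl; [reflexivity| |].
  - rewrite !length_app, nl_cons_var. lia.
  - rewrite nl_cons_let. lia. Qed.

Lemma len_one {A} (x : nat) (u : A) p :
  length (subst (fun y => if Nat.eqb x y then [u] else []) p) = nl p + occ x p.
Proof. induction p as [|[y|a] p IH]; simpl; [reflexivity| |].
  - rewrite length_app. unfold nl in *; simpl in *. destruct (Nat.eqb x y); simpl; lia.
  - unfold nl in *; simpl in *; lia. Qed.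

Fixpoint vars {A} (p : pattern A) : list nat :=
  match p with [] => [] | Var x :: p' => x :: vars p' | Let _ :: p' => vars p' end.

Lemma occ_vars {A} x (p : pattern A) : 0 < occ x p -> In x (vars p).
Proof. induction p as [|[y|a] p IH]; simpl; intros H; [lia| |auto].
  destruct (Nat.eqb_spec x y); [auto|right; apply IH; lia]. Qed.

Lemma occ_big {A} x (p : pattern A) : maxv p < x -> occ x p = 0.
Proof. induction p as [|[y|a] p IH]; simpl; intros H; auto.
  destruct (Nat.eqb_spec x y); [lia|apply IH; lia]. Qed.

Definition Texm (m : nat) (p : pattern unit) : list (example unit) :=
  (repeat tt (nl p), true) ::
  map (fun g => (repeat tt (nl p + g), true))
    (filter (fun g => existsb (fun x => Nat.eqb (occ x p) g) (vars p)) (seq 1 m)).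

Lemma part2_upper m : 1 <= m -> exists prec, strict_po (Pi1_m m) prec /\ PBTD_le (Pi1_m m) prec (2 * m).
Proof.
  intros Hm. exists gprec; split; [apply gprec_po|].
  intros p [Hp Hocc]. exists (Texm m p); split.
  { unfold Texm; simpl; rewrite length_map.
    pose proof (filter_length_le (fun g => existsb (fun x => Nat.eqb (occ x p) g) (vars p)) (seq 1 m)).
    rewrite length_seq in H; lia. }
  assert (Cons : forall w b, In (w, b) (Texm m p) -> b = true /\ lang p w).
  { unfold Texm; intros w b [E|Hin].
    - injection E; intros; subst; split; auto. exists (fun _ => []); apply unit_eq; rewrite repeat_length; reflexivity.
    - apply in_map_iff in Hin; destruct Hin as [g [E Hg]]; injection E; intros; subst; split; auto.
      apply filter_In in Hg; destruct Hg as [_ Hg]. apply existsb_exists in Hg; destruct Hg as [x [_ Ex]].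
      apply Nat.eqb_eq in Ex. exists (fun y => if Nat.eqb x y then [tt] else []).
      apply unit_eq; rewrite len_one, repeat_length; lia. }
  split.
  { intros w b Hin; destruct (Cons w b Hin) as [-> L]; split; auto. }
  intros t _ Nt Ct. apply gprec_teach; auto.
  set (c := nl p).
  assert (Lt : forall w b, In (w, b) (Texm m p) -> lang t w).
  { intros w b Hin. destruct (Cons w b Hin) as [-> _]. apply (Ct w true); auto. }
  assert (Hc : lang t (repeat tt c)) by (apply (Lt _ true); left; reflexivity).
  assert (Ec : nl t = c).
  { destruct Hc as [h E]. pose proof (nl_le h t). rewrite E, repeat_length in H.
    unfold gprec in Nt. fold c in Nt. lia. }
  set (St := fun n => lang t (repeat tt (c + n))).
  assert (S0 : St 0) by (unfold St; rewrite Nat.add_0_r; auto).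
  assert (Sadd : forall a b, St a -> St b -> St (a + b)).
  { unfold St; intros a b [h1 E1] [h2 E2]. exists (fun y => h1 y ++ h2 y).
    apply unit_eq. pose proof (len_concat h1 h2 t). rewrite E1, E2, !repeat_length in H.
    rewrite repeat_length; lia. }
  assert (Smul : forall a k, St a -> St (k * a)).
  { intros a k Ha; induction k; simpl; auto. }
  assert (Socc : forall x, St (occ x p)).
  { intros x. destruct (Nat.eq_dec (occ x p) 0) as [E|E]; [rewrite E; auto|].
    apply (Lt _ true); right. apply in_map_iff. exists (occ x p); split; [reflexivity|].
    apply filter_In; split.
    - apply in_seq. specialize (Hocc x). lia.
    - apply existsb_exists. exists x; split; [apply occ_vars; lia| apply Nat.eqb_refl]. }
  assert (Ssum : forall B f, (forall y, St (f y)) -> St (sumB B f)).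
  { intros B f H; induction B; simpl; auto. }
  intros w [h Ew]. subst w.
  pose proof (len_formula h p (S (maxv p)) ltac:(lia)) as LF.
  eapply lang_len; [|apply (Ssum (S (maxv p)) (fun y => occ y p * length (h y)))].
  - rewrite repeat_length, LF; reflexivity.
  - intros y. rewrite Nat.mul_comm. apply Smul, Socc.
Qed.

Fixpoint patR (g : nat -> nat) (N : nat) : pattern unit :=
  match N with 0 => [] | S N' => patR g N' ++ repeat (Var N') (g N') end.

Lemma occ_app {A} x (p q : pattern A) : occ x (p ++ q) = occ x p + occ x q.
Proof. induction p as [|[y|a] p IH]; simpl; auto; rewrite IH; lia. Qed.

Lemma occ_rep {A} x i k : occ (A:=A) x (repeat (Var i) k) = if Nat.eqb x i then k else 0.
Proof. induction k; simpl; [destruct (Nat.eqb x i); auto|]. rewrite IHk; destruct (Nat.eqb x i); lia. Qed.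

Lemma occ_patR g N x : occ x (patR g N) = if x <? N then g x else 0.
Proof. induction N; simpl; auto. rewrite occ_app, occ_rep, IHN.
  destruct (Nat.ltb_spec x N); destruct (Nat.ltb_spec x (S N)); destruct (Nat.eqb_spec x N); subst; lia. Qed.

Lemma len_patR g N : length (patR g N) = sumB N g.
Proof. induction N; simpl; auto. rewrite length_app, repeat_length; lia. Qed.

Lemma sumB_ge N g i : i < N -> g i <= sumB N g.
Proof. induction N; simpl; intros H; [lia|]. destruct (Nat.eq_dec i N); subst; [lia|]. specialize (IHN ltac:(lia)); lia. Qed.

Lemma subst_rep (h : nat -> list unit) i k : length (subst h (repeat (Var i) k)) = k * length (h i).
Proof. induction k; simpl; auto. rewrite length_app, IHk; lia. Qed.

Lemma len_subst_patR (h : nat -> list unit) g N :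
  length (subst h (patR g N)) = sumB N (fun i => g i * length (h i)).
Proof. induction N; simpl; auto. rewrite subst_app, length_app, IHN, subst_rep; lia. Qed.

Definition inL (g : nat -> nat) (N n : nat) : Prop := exists c, n = sumB N (fun i => g i * c i).

Lemma lang_patR g N w : lang (patR g N) w <-> inL g N (length w).
Proof. split.
  - intros [h E]; exists (fun i => length (h i)); rewrite <- E, len_subst_patR; auto.
  - intros [c E]; exists (fun i => repeat tt (c i)); apply unit_eq.
    rewrite len_subst_patR, E. apply sumB_ext; intros; rewrite repeat_length; auto. Qed.

Lemma sumB_zero N : sumB N (fun _ => 0) = 0.
Proof. induction N; simpl; lia. Qed.

Lemma sumB_indic N g j : j < N -> sumB N (fun i => g i * (if Nat.eqb j i then 1 else 0)) = g j.
Proof. intros H. rewrite <- (sumB_ind N j g H). apply sumB_ext; intros; lia. Qed.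

Lemma small_sum h g c N : 1 <= h -> (forall i, g i = 0 \/ h <= g i) ->
  sumB N (fun i => g i * c i) < 2 * h ->
  sumB N (fun i => g i * c i) = 0 \/ exists i, i < N /\ g i <> 0 /\ sumB N (fun i => g i * c i) = g i.
Proof.
  intros Hh Hg. induction N; simpl; intros Hs; [auto|].
  destruct (Nat.eq_dec (g N * c N) 0) as [Z|Z].
  - rewrite Z, Nat.add_0_r in *. destruct (IHN Hs) as [E|[i [Hi [Ni E]]]]; auto.
    right; exists i; repeat split; auto.
  - assert (h <= g N) by (destruct (Hg N); nia).
    assert (1 <= c N) by nia.
    destruct (IHN ltac:(nia)) as [E|[i [Hi [Ni E]]]].
    + right; exists N; split; [lia|split; [nia|]]. rewrite E.
      destruct (c N) as [|[|cc]]; nia.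
    + exfalso. destruct (Hg i); nia.
Qed.

Lemma big_in h g n : 1 <= h -> (forall i, h <= i < 3 * h -> g i = h + i) -> 2 * h <= n -> inL g (3 * h) n.
Proof.
  intros Hh Hg. induction n as [n IH] using (well_founded_induction lt_wf). intros Hn.
  destruct (Nat.lt_ge_cases n (4 * h)) as [L|L].
  - exists (fun i => if Nat.eqb (n - h) i then 1 else 0). rewrite sumB_indic by lia.
    rewrite Hg; lia.
  - destruct (IH (n - 2 * h) ltac:(lia) ltac:(lia)) as [c E].
    exists (fun i => c i + (if Nat.eqb h i then 1 else 0)).
    rewrite (sumB_ext _ _ (fun i => g i * c i + g i * (if Nat.eqb h i then 1 else 0))) by (intros; lia).
    rewrite sumB_add, sumB_indic, <- E, Hg; lia.
Qed.

Lemma flip_lemma h k gA gB : 1 <= h -> k < h ->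
  (forall i, gA i = 0 \/ gA i = h + i) -> (forall i, gB i = 0 \/ gB i = h + i) ->
  (forall i, h <= i < 3 * h -> gA i = h + i) ->
  (forall i, i <> k -> gA i = gB i) -> gA k = 0 -> gB k = h + k ->
  inL gB (3 * h) (h + k) /\ ~ inL gA (3 * h) (h + k) /\
  forall n, n <> h + k -> (inL gA (3 * h) n <-> inL gB (3 * h) n).
Proof.
  intros Hh Hk HA HB Hbig Heq HAk HBk.
  assert (HBbig : forall i, h <= i < 3 * h -> gB i = h + i).
  { intros i Hi; rewrite <- Heq by lia; auto. }
  assert (HA' : forall i, gA i = 0 \/ h <= gA i) by (intros i; destruct (HA i); lia).
  assert (HB' : forall i, gB i = 0 \/ h <= gB i) by (intros i; destruct (HB i); lia).
  split; [|split].
  - exists (fun i => if Nat.eqb k i then 1 else 0); rewrite sumB_indic by lia; auto.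
  - intros [c E]. destruct (small_sum h gA c (3 * h) Hh HA' ltac:(lia)) as [Z|[i [Hi [Ni Z]]]]; [lia|].
    destruct (HA i) as [Q|Q]; [lia|]. assert (i = k) by lia. subst; lia.
  - intros n Hn; split.
    + intros [c E]. exists (fun i => if Nat.eqb i k then 0 else c i). rewrite E.
      apply sumB_ext; intros i _. destruct (Nat.eqb_spec i k); [subst; rewrite HAk; lia|rewrite Heq; auto].
    + intros [c E]. destruct (Nat.lt_ge_cases n (2 * h)) as [L|L]; [|apply big_in; auto].
      destruct (small_sum h gB c (3 * h) Hh HB' ltac:(lia)) as [Z|[i [Hi [Ni Z]]]].
      * exists (fun _ => 0). rewrite (sumB_ext _ _ (fun _ => 0)) by (intros; lia). rewrite sumB_zero; lia.
      * assert (i <> k) by (intro; subst; lia).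
        exists (fun j => if Nat.eqb i j then 1 else 0). rewrite sumB_indic by lia. rewrite Heq; lia.
Qed.

Lemma minimal_ex {A} (C : A -> Prop) (R : A -> A -> Prop) :
  (forall p, C p -> ~ R p p) -> (forall p q r, C p -> C q -> C r -> R p q -> R q r -> R p r) ->
  forall l, l <> [] -> (forall x, In x l -> C x) -> exists m, In m l /\ forall y, In y l -> ~ R y m.
Proof.
  intros Irr Tr l. induction l as [|a l IH]; intros Hne HC; [congruence|].
  destruct l as [|b l'].
  - exists a; split; [left; auto|]. intros y [<-|[]]; apply Irr, HC; left; auto.
  - destruct (IH ltac:(discriminate) ltac:(intros; apply HC; right; auto)) as [m0 [Hm0 Hmin]].
    destruct (classic (R a m0)) as [P|P].
    + exists a; split; [left; auto|]. intros y [<-|Hy]; [apply Irr, HC; left; auto|].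
      intros Ry. apply (Hmin y Hy). apply (Tr y a m0); auto; apply HC; [right; auto|left; auto|right; auto].
    + exists m0; split; [right; auto|]. intros y [<-|Hy]; auto.
Qed.

Fixpoint allbl (n : nat) : list (list bool) :=
  match n with 0 => [[]] | S n' => flat_map (fun l => [true :: l; false :: l]) (allbl n') end.

Lemma allbl_in n l : length l = n -> In l (allbl n).
Proof. revert l; induction n; intros [|b l] H; simpl in *; try lia; auto.
  apply in_flat_map. exists l; split; [apply IHn; lia|]. destruct b; simpl; auto. Qed.

Lemma allbl_len n l : In l (allbl n) -> length l = n.
Proof. revert l; induction n; intros l H; simpl in *.
  - destruct H as [<-|[]]; auto.
  - apply in_flat_map in H; destruct H as [l' [H1 H2]]. simpl in H2.
    destruct H2 as [<-|[<-|[]]]; simpl; rewrite IHn; auto. Qed.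

Definition gl (h : nat) (l : list bool) (i : nat) : nat :=
  if i <? h then (if nth i l false then h + i else 0) else h + i.

Definition PP (h : nat) (l : list bool) : pattern unit := patR (gl h l) (3 * h).

Lemma pigeon h (L : list nat) : length L < h -> exists k, k < h /\ ~ In (h + k) L.
Proof.
  intros H. apply NNPP; intros N.
  assert (Inc : incl (seq h h) L).
  { intros x Hx. apply in_seq in Hx. apply NNPP; intros Nx. apply N.
    exists (x - h); split; [lia|]. replace (h + (x - h)) with x by lia; auto. }
  pose proof (NoDup_incl_length (seq_NoDup h h) Inc). rewrite length_seq in H0. lia.
Qed.

Lemma lower2 m prec d : 1 <= m -> strict_po (Pi1_m m) prec -> PBTD_le (Pi1_m m) prec d -> m <= 7 * d.
Proof.
  intros Hm [Irr [Tr Co]] Pb.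
  assert (Cyc : forall p q, Pi1_m m p -> Pi1_m m q -> prec p q -> prec q p -> False).
  { intros p q Hp Hq H1 H2; apply (Irr p Hp); eapply Tr; eauto. }
  assert (D1 : 1 <= d).
  { destruct (Nat.eq_dec d 0) as [Z|Z]; [|lia]. exfalso. subst d.
    set (p := [Var 0] : pattern unit); set (q := [Let tt] : pattern unit).
    assert (Cp : Pi1_m m p) by (split; [discriminate|intros x; simpl; destruct (Nat.eqb x 0); lia]).
    assert (Cq : Pi1_m m q) by (split; [discriminate|intros x; simpl; lia]).
    assert (NE : ~ lang_eq q p).
    { intros E. destruct (proj2 (E []) (ex_intro _ (fun _ => []) eq_refl)) as [hh Hh]; discriminate. }
    destruct (Pb p Cp) as [[|e T] [LT [_ Tp]]]; [|simpl in LT; lia].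
    destruct (Pb q Cq) as [[|e T] [LT' [_ Tq]]]; [|simpl in LT'; lia].
    destruct (classic (prec q p)) as [P1|P1]; [|apply NE, Tp; auto; intros w b []].
    destruct (classic (prec p q)) as [P2|P2]; [eapply Cyc; eauto|].
    apply NE. intros w; split; apply (Tq p Cp P2 (fun w b H => match H with end)). }
  set (h := m / 4).
  assert (Hmh : m <= 4 * h + 3) by (unfold h; pose proof (Nat.div_mod m 4); pose proof (Nat.mod_upper_bound m 4); lia).
  assert (Hhm : 4 * h <= m) by (unfold h; pose proof (Nat.div_mod m 4); lia).
  destruct (Nat.eq_dec h 0) as [H0|H0]; [lia|].
  cut (h <= d); [lia|].
  apply NNPP; intros Nd.
  assert (CP : forall l, Pi1_m m (PP h l)).
  { intros l; split.
    - intros E. unfold PP in E. assert (L := f_equal (@length _) E). rewrite len_patR in L. cbn [length] in L.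
      pose proof (sumB_ge (3 * h) (gl h l) h ltac:(lia)).
      assert (G : gl h l h = h + h) by (unfold gl; rewrite (proj2 (Nat.ltb_ge h h) (Nat.le_refl _)); auto).
      lia.
    - intros x. unfold PP; rewrite occ_patR. destruct (Nat.ltb_spec x (3 * h)); [|lia].
      unfold gl. destruct (x <? h); [destruct (nth x l false)|]; lia. }
  destruct (minimal_ex (Pi1_m m) prec Irr Tr (map (PP h) (allbl h)))
    as [m0 [Hm0 Hmin]].
  { intros E; apply map_eq_nil in E.
    pose proof (allbl_in h (repeat true h) (repeat_length _ _)) as Q. rewrite E in Q; destruct Q. }
  { intros x Hx; apply in_map_iff in Hx; destruct Hx as [l [<- _]]; auto. }
  apply in_map_iff in Hm0; destruct Hm0 as [l0 [<- Hl0]]. apply allbl_len in Hl0.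
  destruct (Pb (PP h l0) (CP l0)) as [T [LT [Cons Teach]]].
  assert (LTm : length (map (fun e : example unit => length (fst e)) T) < h) by (rewrite length_map; lia).
  destruct (pigeon h _ LTm) as [k [Hk NI]].
  set (f := fun i => if Nat.eqb i k then negb (nth k l0 false) else nth i l0 false).
  set (l1 := map f (seq 0 h)).
  assert (Hl1 : length l1 = h) by (unfold l1; rewrite length_map, length_seq; auto).
  assert (N1 : forall i, i < h -> nth i l1 false = f i).
  { intros i Hi. unfold l1. rewrite (nth_indep _ false (f 0)) by (rewrite length_map, length_seq; lia).
    rewrite map_nth, seq_nth by lia. auto. }
  assert (FL : (inL (gl h l0) (3 * h) (h + k) <-> ~ inL (gl h l1) (3 * h) (h + k)) /\
               forall n, n <> h + k -> (inL (gl h l0) (3 * h) n <-> inL (gl h l1) (3 * h) n)).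
  { assert (Gi : forall l i, gl h l i = 0 \/ gl h l i = h + i).
    { intros l i; unfold gl; destruct (i <? h); [destruct (nth i l false)|]; auto. }
    assert (Gb : forall l i, h <= i < 3 * h -> gl h l i = h + i).
    { intros l i Hi; unfold gl. rewrite (proj2 (Nat.ltb_ge i h)) by lia; auto. }
    assert (Ge : forall i, i <> k -> gl h l0 i = gl h l1 i).
    { intros i Hi. unfold gl. destruct (Nat.ltb_spec i h); auto. rewrite N1 by auto.
      unfold f. rewrite (proj2 (Nat.eqb_neq i k) Hi); auto. }
    assert (Kk : gl h l1 k = if nth k l0 false then 0 else h + k).
    { unfold gl. rewrite (proj2 (Nat.ltb_lt k h) Hk), N1 by auto. unfold f; rewrite Nat.eqb_refl.
      destruct (nth k l0 false); auto. }
    assert (K0 : gl h l0 k = if nth k l0 false then h + k else 0).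
    { unfold gl. rewrite (proj2 (Nat.ltb_lt k h) Hk). auto. }
    destruct (nth k l0 false).
    - destruct (flip_lemma h k (gl h l1) (gl h l0) ltac:(lia) Hk (Gi l1) (Gi l0) (Gb l1)
        ltac:(intros; symmetry; auto) Kk K0) as [F1 [F2 F3]].
      split; [tauto|]. intros n Hn; symmetry; auto.
    - destruct (flip_lemma h k (gl h l0) (gl h l1) ltac:(lia) Hk (Gi l0) (Gi l1) (Gb l0)
        Ge K0 Kk) as [F1 [F2 F3]].
      split; [tauto|auto]. }
  assert (Hin1 : In l1 (allbl h)) by (apply allbl_in; auto).
  assert (NP : ~ prec (PP h l1) (PP h l0)) by (apply Hmin, in_map; auto).
  assert (Cn : consistent (PP h l1) T).
  { intros w b Hwb. rewrite <- (Cons w b Hwb). unfold PP; rewrite !lang_patR.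
    assert (length w <> h + k).
    { intros E; apply NI; apply in_map_iff; exists (w, b); simpl; auto. }
    destruct FL as [_ F]. symmetry; apply F; auto. }
  pose proof (Teach (PP h l1) (CP l1) NP Cn) as E.
  specialize (E (repeat tt (h + k))). unfold PP in E; rewrite !lang_patR, repeat_length in E.
  destruct FL as [F _]. tauto.
Qed.

Theorem mainTheorem14 :
  (* PBTD(Pi^infty) = 2 *)
  ((exists prec, strict_po Pi_inf prec /\ PBTD_le Pi_inf prec 2) /\
   (forall prec, strict_po Pi_inf prec -> ~ PBTD_le Pi_inf prec 1)) /\
  (* PBTD(Pi^1_{infty,m}) = Theta(m) *)
  (exists a b : nat, 1 <= a /\ 1 <= b /\
     forall m : nat, 1 <= m ->
       (exists prec, strict_po (Pi1_m m) prec /\ PBTD_le (Pi1_m m) prec (b * m)) /\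
       (forall prec d, strict_po (Pi1_m m) prec -> PBTD_le (Pi1_m m) prec d ->
          m <= a * d)).
Proof.
  split; [split; [exact part1_upper | exact lower1]|].
  exists 7, 2; split; [lia|split; [lia|]].
  intros m Hm; split; [apply part2_upper; auto|].
  intros prec d Hs Hp; apply (lower2 m prec d); auto.
Qed.
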